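(* Let $\mathcal{H}_A\cong\mathbb{C}^{d_A}$ and $\mathcal{H}_B\cong\mathbb{C}^{d_B}$ with computational bases $\{|a\rangle\}_{a=0}^{d_A-1}$, $\{|b\rangle\}_{b=0}^{d_B-1}$. For a dimension $d$ define the operator on $(\mathbb{C}^d)^{\otimes 3}$ $$O_+^{(d)}=\sum_{\vec a=(a_1,a_2,a_3)\in\mathbb{Z}_d^3}\Big[(d+1)(d+2)\,\delta_{a_1a_2a_3}-(d+1)\big(\delta_{a_1a_2}+\delta_{a_2a_3}+\delta_{a_1a_3}\big)+2\Big]\,|\vec a\rangle\langle\vec a|,$$ where $\delta_{a_1a_2a_3}=1$ iff $a_1=a_2=a_3$. Let $O_A=O_+^{(d_A)}$ on $\mathcal{H}_A^{\otimes 3}$ and $O_B=O_+^{(d_B)}$ on $\mathcal{H}_B^{\otimes 3}$. Then $\Phi^3_A(O_A)=M_+^A$ and $\Phi^3_B(O_B)=M_+^B$, and consequently $(\Phi^3_A\otimes\Phi^3_B)(O_A\otimes O_B)=M_+^A\otimes M_+^B$.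
   Context: For a Hilbert space $\mathcal{H}\cong\mathbb{C}^d$ and integer $t\ge1$, the $t$-fold twirling channel is $\Phi^t(X)=\int_{\mathrm{Haar}}dU\,U^{\otimes t}XU^{\dagger\otimes t}$ for linear operators $X$ on $\mathcal{H}^{\otimes t}$ (Haar measure on $U(d)$; equivalently an average over a unitary $t$-design). $\Phi^3_A,\Phi^3_B$ denote this channel on $\mathcal{H}_A^{\otimes3}$, $\mathcal{H}_B^{\otimes3}$, and $\Phi^3_A\otimes\Phi^3_B$ denotes independent twirling on the two parties, acting on $(\mathcal{H}_A\otimes\mathcal{H}_B)^{\otimes 3}\cong\mathcal{H}_A^{\otimes3}\otimes\mathcal{H}_B^{\otimes3}$. For $\pi\in S_3$, $W_\pi$ is the permutation operator on $\mathcal{H}^{\otimes 3}$, $W_\pi=\sum_{s_i}|s_{\pi(1)},s_{\pi(2)},s_{\pi(3)}\rangle\langle s_1,s_2,s_3|$; in particular $W_{(1,2,3)}|a_1,a_2,a_3\rangle=|a_2,a_3,a_1\rangle$. $M_+=W_{(1,2,3)}+W_{(1,3,2)}$, with superscripts indicating the system. *)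

(* Defs.v *)
From HB Require Import structures.
From mathcomp Require Import all_boot all_order all_algebra.
From mathcomp Require Import all_classical all_reals all_analysis.
From mathcomp Require Import complex.
Set Implicit Arguments. Unset Strict Implicit. Unset Printing Implicit Defensive.
Import Order.TTheory GRing.Theory Num.Theory.
Import numFieldNormedType.Exports.
Local Open Scope classical_set_scope.
Local Open Scope ring_scope.

(* the usual (modulus-norm) topology on C = R[i], as a normed space over itself;
   it induces the standard topology on d x d complex matrices *)
HB.instance Definition _ (R : rcfType) := NormedModule.copy R[i] R[i]^o.

(* Linear operators on a finite-dimensional Hilbert space with orthonormal
   (computational) basis indexed by a finite type T: matrices T x T -> C. *)
Definition op (R : realType) (T : finType) := T -> T -> R[i].

(* index set of the computational basis of (C^d)^{⊗3}: triples (a1,a2,a3),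
   encoded as ((a1,a2),a3) *)
Definition trip (d : nat) := ('I_d * 'I_d * 'I_d)%type.

Definition unitary (R : realType) (d : nat) (V : 'M[R[i]]_d) : Prop :=
  V *m (map_mx (@conjc R) V)^T = 1%:M.

Definition cexpect (R : realType) (dO : measure_display) (O : measurableType dO)
  (P : probability O R) (f : O -> R[i]) : R[i] :=
  Complex (Rintegral P setT (fun w => complex.Re (f w)))
          (Rintegral P setT (fun w => complex.Im (f w))).

(* U is a Haar-distributed random unitary on the probability space (O, P):
   U takes values in U(d), its entries are random variables, and its law
   (a Borel probability measure on d x d complex matrices) is invariant under
   left multiplication by any fixed unitary V. *)
Definition haar_unitary (R : realType) (dO : measure_display) (O : measurableType dO)
  (P : probability O R) (d : nat) (U : O -> 'M[R[i]]_d) : Prop :=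
  [/\ (forall w, unitary (U w)),
      (forall i j, measurable_fun setT (fun w => complex.Re (U w i j))
                /\ measurable_fun setT (fun w => complex.Im (U w i j)))
    & (forall V : 'M[R[i]]_d, unitary V ->
         forall A : set 'M[R[i]]_d, <<s [set B : set 'M[R[i]]_d | open B] >> A ->
           P (U @^-1` A) = P ((fun w => V *m U w) @^-1` A))].

(* entries of U^{⊗3} in the computational basis *)
Definition tens3 (R : realType) (d : nat) (U : 'M[R[i]]_d) (x y : trip d) : R[i] :=
  U x.1.1 y.1.1 * U x.1.2 y.1.2 * U x.2 y.2.

(* the 3-fold twirl Phi^3(X) = E_U [ U^{⊗3} X U^{†⊗3} ], U Haar distributed *)
Definition twirl3 (R : realType) (dO : measure_display) (O : measurableType dO)
  (P : probability O R) (d : nat) (U : O -> 'M[R[i]]_d)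
  (X : op R (trip d)) : op R (trip d) :=
  fun x z => cexpect P (fun w =>
    \sum_(y : trip d) \sum_(v : trip d)
       tens3 (U w) x y * X y v * conjc (tens3 (U w) z v)).

Definition tensop (R : realType) (T1 T2 : finType) (X : op R T1) (Y : op R T2)
  : op R (T1 * T2)%type :=
  fun x y => X x.1 y.1 * Y x.2 y.2.

Definition matunit (R : realType) (T : finType) (a a' : T) : op R T :=
  fun u v => ((u == a) && (v == a'))%:R.

(* tensor product of linear superoperators Phi1 ⊗ Phi2, defined by its action on
   the matrix-unit basis: (Phi1 ⊗ Phi2)(Z) = sum Z_{(a,b),(a',b')} Phi1(|a><a'|) ⊗ Phi2(|b><b'|) *)
Definition tens_super (R : realType) (T1 T2 : finType)
  (Phi1 : op R T1 -> op R T1) (Phi2 : op R T2 -> op R T2)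
  (Z : op R (T1 * T2)%type) : op R (T1 * T2)%type :=
  fun x y => \sum_(a : T1) \sum_(a' : T1) \sum_(b : T2) \sum_(b' : T2)
     Z (a, b) (a', b') * (Phi1 (matunit R a a') x.1 y.1 * Phi2 (matunit R b b') x.2 y.2).

Definition Oplus (R : realType) (d : nat) : op R (trip d) :=
  fun x y => if x == y then
    let: (a1, a2, a3) := x in
      ((d + 1) * (d + 2))%N%:R * ((a1 == a2) && (a2 == a3))%:R
      - (d + 1)%N%:R * ((a1 == a2)%:R + (a2 == a3)%:R + (a1 == a3)%:R) + 2
  else 0.

(* W_pi |s1 s2 s3> = |s_pi(1) s_pi(2) s_pi(3)>;
   W_(123)|a1 a2 a3> = |a2 a3 a1>,  W_(132)|a1 a2 a3> = |a3 a1 a2>. *)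
Definition W123 (R : realType) (d : nat) : op R (trip d) :=
  fun x y => let: (y1, y2, y3) := y in (x == (y2, y3, y1))%:R.
Definition W132 (R : realType) (d : nat) : op R (trip d) :=
  fun x y => let: (y1, y2, y3) := y in (x == (y3, y1, y2))%:R.
Definition Mplus (R : realType) (d : nat) : op R (trip d) :=
  fun x y => @W123 R d x y + @W132 R d x y.

(* Main.v *)
Require Import Defs.
From HB Require Import structures.
From mathcomp Require Import all_boot all_order all_algebra.
From mathcomp Require Import all_classical all_reals all_analysis.
From mathcomp Require Import complex.
From mathcomp Require Import ring lra zify measurable_realfun.
Set Implicit Arguments. Unset Strict Implicit. Unset Printing Implicit Defensive.
Import Order.TTheory GRing.Theory Num.Theory.
Import numFieldNormedType.Exports.
Local Open Scope classical_set_scope.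
Local Open Scope ring_scope.

Section Cx.
Variable R : realType.
Local Notation C := (R[i]).
Lemma qReD (a b : C) : complex.Re (a + b) = complex.Re a + complex.Re b. Proof. by case: a; case: b. Qed.
Lemma qImD (a b : C) : complex.Im (a + b) = complex.Im a + complex.Im b. Proof. by case: a; case: b. Qed.
Lemma qReM (a b : C) : complex.Re (a * b) = complex.Re a * complex.Re b - complex.Im a * complex.Im b. Proof. by case: a; case: b. Qed.
Lemma qImM (a b : C) : complex.Im (a * b) = complex.Re a * complex.Im b + complex.Im a * complex.Re b. Proof. by case: a => a1 a2; case: b => b1 b2 /=; ring. Qed.
Lemma qRe_sum (I : Type) (r : seq I) (P : pred I) (F : I -> C) : complex.Re (\sum_(i <- r | P i) F i) = \sum_(i <- r | P i) complex.Re (F i).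
Proof. by apply: (big_morph _ qReD). Qed.
Lemma qIm_sum (I : Type) (r : seq I) (P : pred I) (F : I -> C) : complex.Im (\sum_(i <- r | P i) F i) = \sum_(i <- r | P i) complex.Im (F i).
Proof. by apply: (big_morph _ qImD). Qed.
Lemma qnormRe (z : C) : `|complex.Re z| <= complex.Re `|z|.
Proof. rewrite normc_def /= -sqrtr_sqr; apply: ler_wsqrtr; by rewrite lerDl sqr_ge0. Qed.
Lemma qnormIm (z : C) : `|complex.Im z| <= complex.Re `|z|.
Proof. rewrite normc_def /= -sqrtr_sqr; apply: ler_wsqrtr; by rewrite lerDr sqr_ge0. Qed.

Section Good.
Context {dT : measure_display} {T : measurableType dT}.
Definition cmeas (f : T -> C) := measurable_fun setT (fun w => complex.Re (f w)) /\
   measurable_fun setT (fun w => complex.Im (f w)).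
Definition cbnd (f : T -> C) := exists2 M : R, 0 <= M & forall w, `|complex.Re (f w)| <= M /\ `|complex.Im (f w)| <= M.

Lemma cmeas_cst c : cmeas (fun=> c). Proof. by split; apply: measurable_cst. Qed.
Lemma cmeas_add f g : cmeas f -> cmeas g -> cmeas (fun w => f w + g w).
Proof.
move=> [f1 f2] [g1 g2]; split.
  by under eq_fun do rewrite qReD; apply: measurable_funD.
by under eq_fun do rewrite qImD; apply: measurable_funD.
Qed.
Lemma cmeas_mul f g : cmeas f -> cmeas g -> cmeas (fun w => f w * g w).
Proof.
move=> [f1 f2] [g1 g2]; split.
  by under eq_fun do rewrite qReM; apply: measurable_funB; apply: measurable_funM.
by under eq_fun do rewrite qImM; apply: measurable_funD; apply: measurable_funM.
Qed.
Lemma cmeas_conj f : cmeas f -> cmeas (fun w => conjc (f w)).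
Proof.
move=> [f1 f2]; split.
  by under eq_fun => w do have -> : complex.Re (conjc (f w)) = complex.Re (f w) by case: (f w).
under eq_fun => w do have -> : complex.Im (conjc (f w)) = - complex.Im (f w) by case: (f w).
exact: measurable_funN.
Qed.
Lemma cmeas_sum (I : eqType) (r : seq I) (F : I -> T -> C) :
  (forall i, cmeas (F i)) -> cmeas (fun w => \sum_(i <- r) F i w).
Proof.
move=> H; split.
  under eq_fun do rewrite qRe_sum; apply: measurable_sum => i; exact: (H i).1.
under eq_fun do rewrite qIm_sum; apply: measurable_sum => i; exact: (H i).2.
Qed.

Lemma cbnd_cst c : cbnd (fun=> c).
Proof.
exists (`|complex.Re c| + `|complex.Im c|); first by rewrite addr_ge0.
by move=> w; rewrite lerDl lerDr !normr_ge0.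
Qed.
Lemma cbnd_add f g : cbnd f -> cbnd g -> cbnd (fun w => f w + g w).
Proof.
move=> [M1 M10 H1] [M2 M20 H2]; exists (M1 + M2); first by rewrite addr_ge0.
move=> w; have [a b] := H1 w; have [c e] := H2 w; rewrite qReD qImD; split.
  by apply: (le_trans (ler_normD _ _)); apply: lerD.
by apply: (le_trans (ler_normD _ _)); apply: lerD.
Qed.
Lemma cbnd_mul f g : cbnd f -> cbnd g -> cbnd (fun w => f w * g w).
Proof.
move=> [M1 M10 H1] [M2 M20 H2]; exists (M1 * M2 + M1 * M2); first by rewrite addr_ge0 ?mulr_ge0.
move=> w; have [a b] := H1 w; have [c e] := H2 w; rewrite qReM qImM; split.
  apply: (le_trans (ler_normB _ _)); apply: lerD; rewrite normrM; exact: ler_pM.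
apply: (le_trans (ler_normD _ _)); apply: lerD; rewrite normrM; exact: ler_pM.
Qed.
Lemma cbnd_conj f : cbnd f -> cbnd (fun w => conjc (f w)).
Proof.
move=> [M M0 H]; exists M => // w; have := H w; case: (f w) => a b /=.
by rewrite normrN.
Qed.
Lemma cbnd_sum (I : eqType) (r : seq I) (F : I -> T -> C) :
  (forall i, cbnd (F i)) -> cbnd (fun w => \sum_(i <- r) F i w).
Proof.
move=> H; elim: r => [|a r IH].
  under eq_fun do rewrite big_nil; exact: cbnd_cst.
under eq_fun do rewrite big_cons; exact: cbnd_add.
Qed.

Lemma cmeas_prod (I : eqType) (r : seq I) (F : I -> T -> C) :
  (forall i, cmeas (F i)) -> cmeas (fun w => \prod_(i <- r) F i w).
Proof.
move=> H; elim: r => [|a r IH].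
  under eq_fun do rewrite big_nil; exact: cmeas_cst.
under eq_fun do rewrite big_cons; exact: cmeas_mul.
Qed.
Lemma cbnd_prod (I : eqType) (r : seq I) (F : I -> T -> C) :
  (forall i, cbnd (F i)) -> cbnd (fun w => \prod_(i <- r) F i w).
Proof.
move=> H; elim: r => [|a r IH].
  under eq_fun do rewrite big_nil; exact: cbnd_cst.
under eq_fun do rewrite big_cons; exact: cbnd_mul.
Qed.
Definition cgood f := cmeas f /\ cbnd f.
Lemma cgood_cst c : cgood (fun=> c). Proof. split; [exact: cmeas_cst|exact: cbnd_cst]. Qed.
Lemma cgood_add f g : cgood f -> cgood g -> cgood (fun w => f w + g w).
Proof. by move=> [? ?] [? ?]; split; [exact: cmeas_add|exact: cbnd_add]. Qed.
Lemma cgood_mul f g : cgood f -> cgood g -> cgood (fun w => f w * g w).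
Proof. by move=> [? ?] [? ?]; split; [exact: cmeas_mul|exact: cbnd_mul]. Qed.
Lemma cgood_conj f : cgood f -> cgood (fun w => conjc (f w)).
Proof. by move=> [? ?]; split; [exact: cmeas_conj|exact: cbnd_conj]. Qed.
Lemma cgood_sum (I : eqType) (r : seq I) (F : I -> T -> C) :
  (forall i, cgood (F i)) -> cgood (fun w => \sum_(i <- r) F i w).
Proof. by move=> H; split; [apply: cmeas_sum => i; case: (H i)|apply: cbnd_sum => i; case: (H i)]. Qed.
Lemma cgood_prod (I : eqType) (r : seq I) (F : I -> T -> C) :
  (forall i, cgood (F i)) -> cgood (fun w => \prod_(i <- r) F i w).
Proof. by move=> H; split; [apply: cmeas_prod => i; case: (H i)|apply: cbnd_prod => i; case: (H i)]. Qed.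
End Good.
End Cx.

Section Exp.
Variable R : realType.
Local Notation C := (R[i]).
Context {dO : measure_display} {O : measurableType dO} (P : probability O R).
Local Notation E := (cexpect P).

Lemma integ_real (g : O -> R) : measurable_fun setT g ->
  (exists2 M, 0 <= M & forall w, `|g w| <= M) -> P.-integrable setT (EFin \o g).
Proof.
move=> mg [M M0 H]; apply: measurable_bounded_integrable => //.
  by apply: (le_lt_trans (probability_le1 P measurableT)); rewrite ltry.

exists M; split; first exact: num_real.
move=> x Mx y _ /=; apply: (le_trans (H y)); exact: ltW.
Qed.

Lemma integ_Re f : cgood f -> P.-integrable setT (EFin \o (fun w => complex.Re (f w))).
Proof. move=> [[m1 m2] [M M0 H]]; apply: integ_real => //; exists M => // w; exact: (H w).1. Qed.
Lemma integ_Im f : cgood f -> P.-integrable setT (EFin \o (fun w => complex.Im (f w))).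
Proof. move=> [[m1 m2] [M M0 H]]; apply: integ_real => //; exists M => // w; exact: (H w).2. Qed.

Lemma E_ext f g : (forall w, f w = g w) -> E f = E g.
Proof. by move=> H; have -> : f = g by apply: funext. Qed.

Lemma E_add f g : cgood f -> cgood g -> E (fun w => f w + g w) = E f + E g.
Proof.
move=> gf gg; rewrite /cexpect.
under eq_Rintegral do rewrite qReD. under [in X in Complex _ X]eq_Rintegral do rewrite qImD.
rewrite !RintegralD //; try exact: integ_Re; try exact: integ_Im.
Qed.

Lemma E_cst c : E (fun=> c) = c.
Proof.
rewrite /cexpect !Rintegral_cst // [X in fine X](_ : _ = 1%E) /= ?mulr1; last exact: probability_setT.
by case: c.
Qed.

Lemma integZ k (g : O -> R) : P.-integrable setT (EFin \o g) ->
  P.-integrable setT (EFin \o (fun w => k * g w)).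
Proof.
move=> h; apply: (@eq_integrable _ _ _ P setT measurableT (fun x => (k%:E * (g x)%:E)%E)).
  by move=> x _ /=; rewrite EFinM.
exact: integrableZl.
Qed.

Lemma E_scale c f : cgood f -> E (fun w => c * f w) = c * E f.
Proof.
move=> gf; rewrite /cexpect.
under eq_Rintegral do rewrite qReM. under [in X in Complex _ X]eq_Rintegral do rewrite qImM.
have ir := integ_Re gf; have ii := integ_Im gf.
rewrite RintegralB ?RintegralD ?RintegralZl //; try exact: integZ.
by case: c => a b /=; congr Complex.
Qed.

Lemma E_sum (I : eqType) (r : seq I) (F : I -> O -> C) : (forall i, cgood (F i)) ->
  E (fun w => \sum_(i <- r) F i w) = \sum_(i <- r) E (F i).
Proof.
move=> H; elim: r => [|a r IH].
  by under E_ext do rewrite big_nil; rewrite E_cst big_nil.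
under E_ext do rewrite big_cons; rewrite E_add ?IH ?big_cons //.
exact: cgood_sum.
Qed.
End Exp.

Section H.
Variable R : realType.
Local Notation C := (R[i]).
Variable d : nat.
Local Notation M := 'M[C]_d.
Definition MT := g_sigma_algebraType (@open M).

Lemma cont_entry (i j : 'I_d) (phi : C -> R) :
  (forall z w : C, `|phi z - phi w| <= complex.Re `|z - w|) ->
  continuous (fun B : M => phi (B i j)).
Proof.
move=> Hphi B A /= hA.
move/nbhs_ballP: hA => [e e0 H].
exists (fun i' j' => if (i' == i) && (j' == j) then ball (B i j) (e%:C)%C else setT).
  move=> i' j'; case: ifP => [/andP[/eqP -> /eqP ->]|_]; last exact: filterT.
  by apply: nbhsx_ballx; rewrite ltcR.
move=> N /(_ i j); rewrite !eqxx /= => hN; apply: H.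
rewrite -ball_normE /= in hN *.
apply: (le_lt_trans (Hphi _ _)).
rewrite normc_def /=; by move: hN; rewrite normc_def ltcR.
Qed.

Lemma Re_lip (z w : C) : `|complex.Re z - complex.Re w| <= complex.Re `|z - w|.
Proof. have -> : complex.Re z - complex.Re w = complex.Re (z - w) by case: z; case: w. exact: qnormRe. Qed.
Lemma Im_lip (z w : C) : `|complex.Im z - complex.Im w| <= complex.Re `|z - w|.
Proof. have -> : complex.Im z - complex.Im w = complex.Im (z - w) by case: z; case: w. exact: qnormIm. Qed.

Lemma meas_cont (phi : M -> R) : continuous phi -> measurable_fun setT (phi : MT -> R).
Proof.
move=> cphi; apply: (measurability _ (RGenOpens.measurableE R)).
move=> _ [_ [a [b ->] <-]]; rewrite setTI.
apply: sub_sigma_algebra; apply: (proj1 (continuousP _) cphi).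
exact: interval_open.
Qed.

Lemma cmeas_entry (i j : 'I_d) : cmeas (fun B : MT => (B : M) i j).
Proof.
split; apply: meas_cont; apply: cont_entry; [exact: Re_lip|exact: Im_lip].
Qed.

Context {dO : measure_display} {O : measurableType dO} (P : probability O R).

Lemma haar_real (U : O -> M) (V : M) : haar_unitary P U -> unitary V ->
  forall g : MT -> R, measurable_fun setT g ->
  measurable_fun setT (fun w => g (U w)) -> measurable_fun setT (fun w => g (V *m U w)) ->
  (exists2 K, 0 <= K & forall w, `|g (U w)| <= K) ->
  (exists2 K, 0 <= K & forall w, `|g (V *m U w)| <= K) ->
  Rintegral P setT (fun w => g (V *m U w)) = Rintegral P setT (fun w => g (U w)).
Proof.
move=> [_ _ hU] uV g mg m1 m2 b1 b2.
pose X1 : {mfun O >-> R} := MeasurableFun.Pack (MeasurableFun.Class (isMeasurableFun.Build _ _ _ _ _ m1)).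
pose X2 : {mfun O >-> R} := MeasurableFun.Pack (MeasurableFun.Class (isMeasurableFun.Build _ _ _ _ _ m2)).
rewrite /Rintegral; congr fine.
have -> : (\int[P]_(x in setT) (g (U x))%:E = \int[distribution P X1]_y y%:E)%E.
  by rewrite integral_distribution //; apply: integ_real.
have -> : (\int[P]_(x in setT) (g (V *m U x))%:E = \int[distribution P X2]_y y%:E)%E.
  by rewrite integral_distribution //; apply: integ_real.
apply: eq_measure_integral => A mA _.
rewrite /distribution /pushforward /=.
have hA : <<s [set B : set M | open B] >> (g @^-1` A).
  by have := mg measurableT A mA; rewrite setTI.
by have := hU V uV _ hA.
Qed.

Lemma haar_E (U : O -> M) (V : M) : haar_unitary P U -> unitary V ->
  forall h : MT -> C, cmeas h -> cgood (fun w => h (U w)) -> cgood (fun w => h (V *m U w)) ->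
  cexpect P (fun w => h (V *m U w)) = cexpect P (fun w => h (U w)).
Proof.
move=> hU uV h [mh1 mh2] [[m1 m2] [K1 K10 b1]] [[m3 m4] [K2 K20 b2]].
rewrite /cexpect; congr Complex.
  apply: (haar_real hU uV (g := fun B => complex.Re (h B))) => //.
  - by exists K1 => // w; case: (b1 w).
  - by exists K2 => // w; case: (b2 w).
apply: (haar_real hU uV (g := fun B => complex.Im (h B))) => //.
- by exists K1 => // w; case: (b1 w).
- by exists K2 => // w; case: (b2 w).
Qed.

Lemma unitary_row (V : M) : unitary V -> forall i k,
  \sum_b V i b * conjc (V k b) = (i == k)%:R.
Proof.
rewrite /unitary => uV i k; have := congr1 (fun A : M => A i k) uV; rewrite /= !mxE => <-.
by apply: eq_bigr => b _; rewrite !mxE.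
Qed.

Lemma unitary_col (V : M) : unitary V -> forall a a',
  \sum_m conjc (V m a) * V m a' = (a == a')%:R.
Proof.
rewrite /unitary => uV a a'; have uV' := mulmx1C uV.
have := congr1 (fun A : M => A a a') uV'; rewrite /= !mxE => <-.
by apply: eq_bigr => b _; rewrite !mxE.
Qed.

Lemma unitary_bnd (V : M) : unitary V -> forall i j,
  `|complex.Re (V i j)| <= 1 /\ `|complex.Im (V i j)| <= 1.
Proof.
move=> uV i j; have := unitary_row uV i i; rewrite eqxx.
move/(congr1 (@complex.Re R)); rewrite qRe_sum /=.
rewrite (bigD1 j) //= => H.
have hr : forall z : C, complex.Re (z * conjc z) = complex.Re z ^+ 2 + complex.Im z ^+ 2.
  by case=> a b /=; rewrite !expr2; ring.
have h0 : 0 <= \sum_(b | b != j) complex.Re (V i b * conjc (V i b)).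
  by apply: sumr_ge0 => b _; rewrite hr addr_ge0 // sqr_ge0.
rewrite hr in H.
have h1 : complex.Re (V i j) ^+ 2 + complex.Im (V i j) ^+ 2 <= 1 by rewrite -H lerDl.
have hre : `|complex.Re (V i j)| ^+ 2 <= 1.
  by rewrite real_normK ?num_real //; apply: le_trans h1; rewrite lerDl sqr_ge0.
have him : `|complex.Im (V i j)| ^+ 2 <= 1.
  by rewrite real_normK ?num_real //; apply: le_trans h1; rewrite lerDr sqr_ge0.
split; [move: hre|move: him]; set x := `|_|; have : 0 <= x by apply: normr_ge0.
  by move=> ? ?; nra.
by move=> ? ?; nra.
Qed.

Lemma cgood_entry (U : O -> M) : haar_unitary P U -> forall i j, cgood (fun w => U w i j).
Proof.
move=> [uU mU _] i j; split; first by case: (mU i j).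
by exists 1 => // w; apply: unitary_bnd.
Qed.
End H.

Section A.
Variable R : realType.
Local Notation C := (R[i]).
Variable d : nat.
Local Notation M := 'M[C]_d.
Context {dO : measure_display} {O : measurableType dO} (P : probability O R) (U : O -> M).
Hypothesis hU : haar_unitary P U.
Local Notation E := (cexpect P).

Definition G (s t : seq 'I_d) (B : M) : C :=
  \sum_a (\prod_(k <- s) B k a) * (\prod_(k <- t) conjc (B k a)).
Definition Em s t := E (fun w => G s t (U w)).

Lemma cmeas_G s t : cmeas (fun B : MT R d => G s t B).
Proof.
apply: cmeas_sum => a; apply: cmeas_mul; apply: cmeas_prod => k.
  exact: cmeas_entry.
apply: cmeas_conj; exact: cmeas_entry.
Qed.

Lemma cgood_Gf (F : O -> M) s t : (forall k a, cgood (fun w => F w k a)) ->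
  cgood (fun w => G s t (F w)).
Proof.
move=> H; apply: cgood_sum => a; apply: cgood_mul; apply: cgood_prod => k.
  exact: H.
apply: cgood_conj; exact: H.
Qed.

Lemma cgood_VU (V : M) k a : cgood (fun w => (V *m U w) k a).
Proof.
under eq_fun do rewrite mxE; apply: cgood_sum => l; apply: cgood_mul.
  exact: cgood_cst.
exact: (cgood_entry hU).
Qed.

Lemma Em_inv (V : M) s t : unitary V -> E (fun w => G s t (V *m U w)) = Em s t.
Proof.
move=> uV; apply: (haar_E hU uV (h := G s t)).
- exact: cmeas_G.
- by apply: cgood_Gf => k a; exact: (cgood_entry hU).
- by apply: cgood_Gf => k a; exact: cgood_VU.
Qed.

Definition iC : C := Complex 0 1.
Lemma iC_conj : iC * conjc iC = 1.
Proof. apply/eqP; rewrite eq_complex /=. by apply/andP; split; apply/eqP; ring. Qed.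
Lemma iC2 : iC ^+ 2 = -1.
Proof. apply/eqP; rewrite expr2 eq_complex /=. by apply/andP; split; apply/eqP; ring. Qed.

Lemma iC3 : conjc iC = iC ^+ 3.
Proof. apply/eqP; rewrite !exprS expr0 mulr1 eq_complex /=; by apply/andP; split; apply/eqP; ring. Qed.
Lemma iC4 : iC ^+ 4 = 1.
Proof. by rewrite -[4%N]/(2 * 2)%N exprM iC2 sqrrN expr1n. Qed.
Lemma iC_mod n : iC ^+ n = iC ^+ (n %% 4)%N.
Proof. by rewrite {1}(divn_eq n 4) exprD mulnC exprM iC4 expr1n mul1r. Qed.
Lemma iC_ne1 n : (n %% 4 != 0)%N -> iC ^+ n != 1.
Proof.
rewrite iC_mod; have : (n %% 4 < 4)%N by rewrite ltn_pmod.
case: (n %% 4)%N => [|[|[|[|r]]]] //= _ _.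
- rewrite expr1 eq_complex /=; apply/negP => /andP[_]; by rewrite oner_eq0.
- rewrite iC2; apply/eqP => /(congr1 (@complex.Re R)) /=; lra.
- rewrite exprS iC2 mulrN1; apply/eqP => /(congr1 (@complex.Im R)) /=; lra.
Qed.

Definition ph (j k : 'I_d) : C := if k == j then iC else 1.
Definition D j : M := \matrix_(k, l) ((k == l)%:R * ph j k).

Lemma sum_delta (F : 'I_d -> C) k : \sum_l (k == l)%:R * F l = F k.
Proof.
rewrite (bigD1 k) //= eqxx mul1r big1 ?addr0 // => l.
by rewrite eq_sym => /negbTE ->; rewrite mul0r.
Qed.

Lemma DmulE j (B : M) k a : (D j *m B) k a = ph j k * B k a.
Proof. rewrite mxE; under eq_bigr do rewrite mxE -mulrA; by rewrite sum_delta. Qed.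

Lemma D_unitary j : unitary (D j).
Proof.
rewrite /unitary; apply/matrixP => k l; rewrite !mxE.
under eq_bigr do rewrite !mxE -mulrA; rewrite sum_delta.
case: (eqVneq k l) => [->|hkl].
  rewrite /= ?eqxx /= mulr1n mul1r /ph; case: ifP => _; first exact: iC_conj.
  by rewrite mul1r; apply/eqP; rewrite eq_complex /= oppr0 !eqxx.
by rewrite ?(eq_sym l k) ?(negbTE hkl) /= mulr0n mul0r rmorph0 mulr0.
Qed.

Lemma prod_ph j s : \prod_(k <- s) ph j k = iC ^+ count_mem j s.
Proof.
elim: s => [|k s IH]; first by rewrite big_nil expr0.
rewrite big_cons IH /= /ph; case: (k == j); by rewrite ?add1n ?add0n ?exprS ?mul1r.
Qed.
Lemma prod_phc j s : \prod_(k <- s) conjc (ph j k) = conjc iC ^+ count_mem j s.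
Proof.
elim: s => [|k s IH]; first by rewrite big_nil expr0.
rewrite big_cons IH /= /ph; case: (k == j); rewrite ?add1n ?add0n ?exprS //.
by rewrite rmorph1 mul1r.
Qed.

Lemma G_D j s t (B : M) : G s t (D j *m B) = (iC ^+ count_mem j s * conjc iC ^+ count_mem j t) * G s t B.
Proof.
rewrite /G mulr_sumr; apply: eq_bigr => a _.
have -> : \prod_(k <- s) (D j *m B) k a = (\prod_(k <- s) ph j k) * \prod_(k <- s) B k a.
  by rewrite -big_split; apply: eq_bigr => k _; rewrite DmulE.
have -> : \prod_(k <- t) conjc ((D j *m B) k a) = (\prod_(k <- t) conjc (ph j k)) * \prod_(k <- t) conjc (B k a).
  by rewrite -big_split; apply: eq_bigr => k _; rewrite DmulE rmorphM.
rewrite prod_ph prod_phc; ring.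
Qed.

Lemma Em_ph j s t : Em s t = (iC ^+ count_mem j s * conjc iC ^+ count_mem j t) * Em s t.
Proof.
rewrite -{1}(Em_inv _ _ (D_unitary j)) /Em -E_scale; last first.
  by apply: cgood_Gf => k a; exact: (cgood_entry hU).
by apply: E_ext => w; exact: G_D.
Qed.

Lemma Em_zero j s t : ((count_mem j s + 3 * count_mem j t) %% 4 != 0)%N -> Em s t = 0.
Proof.
move=> h; have e := Em_ph j s t.
have hc : iC ^+ count_mem j s * conjc iC ^+ count_mem j t = iC ^+ (count_mem j s + 3 * count_mem j t)%N.
  by rewrite iC3 -exprM exprD mulnC.
rewrite hc in e.
have : (1 - iC ^+ (count_mem j s + 3 * count_mem j t)%N) * Em s t = 0.
  by rewrite mulrBl mul1r -e subrr.
move/eqP; rewrite mulf_eq0 subr_eq0 eq_sym (negbTE (iC_ne1 h)) /=.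
by move/eqP.
Qed.
End A.

Section B.
Variable R : realType.
Local Notation C := (R[i]).
Variable d : nat.
Local Notation M := 'M[C]_d.
Context {dO : measure_display} {O : measurableType dO} (P : probability O R) (U : O -> M).
Hypothesis hU : haar_unitary P U.
Local Notation E := (cexpect P).
Local Notation Em := (Em P U).

Lemma E_lin2 (L : seq nat) (a : nat -> nat -> C) (w1 w2 : nat -> seq 'I_d) :
  E (fun w => \sum_(i <- L) \sum_(j <- L) a i j * G (w1 i) (w2 j) (U w)) =
  \sum_(i <- L) \sum_(j <- L) a i j * Em (w1 i) (w2 j).
Proof.
have gG : forall s t, cgood (fun w => G s t (U w)).
  by move=> s t; apply: cgood_Gf => k b; exact: (cgood_entry hU).
rewrite E_sum; last first.
  move=> i; apply: cgood_sum => j; apply: cgood_mul => //; exact: cgood_cst.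
apply: eq_bigr => i _; rewrite E_sum; last first.
  move=> j; apply: cgood_mul => //; exact: cgood_cst.
by apply: eq_bigr => j _; rewrite E_scale.
Qed.

Lemma phase_kill (L : seq nat) (p : 'I_d) (a : nat -> nat -> C) (w : nat -> seq 'I_d) :
  uniq L -> {in L, forall i, i < 4 /\ count_mem p (w i) = i}%N ->
  \sum_(i <- L) \sum_(j <- L) a i j * Em (w i) (w j) =
  \sum_(i <- L) a i i * Em (w i) (w i).
Proof.
move=> uL hL; apply: eq_big_seq => i iL.
rewrite (bigD1_seq i) //= big1_seq ?addr0 // => j /andP[hji jL].
rewrite (Em_zero hU (j := p)) ?mulr0 //.
have [hi ci] := hL i iL; have [hj cj] := hL j jL.
rewrite ci cj; move: hji hi hj; clear; move=> /eqP hji hi hj; lia.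
Qed.

Variables (p q : 'I_d) (c s : C).
Hypotheses (hpq : p != q) (hc : conjc c = c) (hs : conjc s = s) (hcs : c ^+ 2 + s ^+ 2 = 1).

Definition Rot : M := \matrix_(k, l)
  (if k == p then (if l == p then c else if l == q then - s else 0)
   else if k == q then (if l == p then s else if l == q then c else 0)
   else (k == l)%:R).

Lemma sum2 (x y : C) (F : 'I_d -> C) :
  \sum_l (if l == p then x else if l == q then y else 0) * F l = x * F p + y * F q.
Proof.
rewrite (bigD1 p) //= eqxx (bigD1 q) /=; last by rewrite eq_sym.
rewrite eq_sym (negbTE hpq) eqxx big1 ?addr0 // => l /andP[hp hq].
by rewrite (negbTE hp) (negbTE hq) mul0r.
Qed.

Lemma RotE_p (B : M) a : (Rot *m B) p a = c * B p a - s * B q a.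
Proof. rewrite mxE; under eq_bigr do rewrite mxE eqxx; by rewrite sum2 mulNr. Qed.
Lemma RotE_q (B : M) a : (Rot *m B) q a = s * B p a + c * B q a.
Proof.
rewrite mxE; under eq_bigr do rewrite mxE eqxx eq_sym (negbTE hpq); by rewrite sum2.
Qed.
Lemma RotE_r (B : M) r a : r != p -> r != q -> (Rot *m B) r a = B r a.
Proof.
move=> hp hq; rewrite mxE; under eq_bigr do rewrite mxE (negbTE hp) (negbTE hq).
exact: sum_delta.
Qed.

Lemma conjN (x : C) : conjc (- x) = - conjc x. Proof. by case: x. Qed.
Lemma conj0 : conjc (0 : C) = 0. Proof. by apply/eqP; rewrite eq_complex /= oppr0 !eqxx. Qed.
Lemma conj0' : (Complex 0 (- 0) : C) = 0. Proof. by rewrite oppr0. Qed.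

Lemma Rot_unitary : unitary Rot.
Proof.
rewrite /unitary; apply/matrixP => k l.
have hqp : q != p by rewrite eq_sym.
have EB : forall x, ((map_mx conjc Rot)^T : M) x l = conjc (Rot l x) by move=> x; rewrite !mxE.
rewrite [RHS]mxE.
have [hk|hkp] := eqVneq k p; [subst k; rewrite RotE_p|have [hk|hkq] := eqVneq k q; [subst k; rewrite RotE_q|rewrite RotE_r //]];
rewrite !EB !mxE;
(have [hl|hlp] := eqVneq l p; [subst l|have [hl|hlq] := eqVneq l q; [subst l|]]);
rewrite ?eqxx ?(negbTE hqp) ?(negbTE hpq) ?(negbTE hkp) ?(negbTE hkq) ?(negbTE hlp) ?(negbTE hlq) /=;
rewrite ?(eq_sym k p) ?(eq_sym k q) ?(eq_sym p l) ?(eq_sym q l) ?(negbTE hkp) ?(negbTE hkq) ?(negbTE hlp) ?(negbTE hlq) /=;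
rewrite ?mulr1n ?mulr0n ?conjN ?conj0 ?conj0' ?hc ?hs ?mulr0 ?subrr ?addr0 ?conjc_nat 1?eq_sym //;
try (by ring); try (by rewrite -hcs; ring).
Qed.

Lemma conjM (x y : C) : conjc (x * y) = conjc x * conjc y.
Proof. by case: x => a b; case: y => e f /=; congr Complex; ring. Qed.
Lemma conjB (x y : C) : conjc (x - y) = conjc x - conjc y.
Proof. by case: x => a b; case: y => e f /=; congr Complex; ring. Qed.
Lemma conjD (x y : C) : conjc (x + y) = conjc x + conjc y.
Proof. by case: x => a b; case: y => e f /=; congr Complex; ring. Qed.

Definition w3 (i : nat) : seq 'I_d :=
  match i with 0 => [:: q; q; q] | 1 => [:: p; q; q] | 2 => [:: p; p; q] | _ => [:: p; p; p] end%N.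
Definition k3 (i : nat) : C :=
  match i with 0%N => (- s) ^+ 3 | 1%N => 3 * c * (- s) ^+ 2 | 2%N => 3 * c ^+ 2 * (- s) | _ => c ^+ 3 end.

Lemma G_rot3 (B : M) : G [:: p; p; p] [:: p; p; p] (Rot *m B) =
  \sum_(i <- [:: 0; 1; 2; 3]%N) \sum_(j <- [:: 0; 1; 2; 3]%N) k3 i * k3 j * G (w3 i) (w3 j) B.
Proof.
rewrite /G !big_cons !big_nil /= !addr0 !mulr_sumr -!big_split /=.
apply: eq_bigr => a _; rewrite !big_cons !big_nil RotE_p conjB !conjM hc hs; ring.
Qed.

Lemma count_w3 : {in [:: 0; 1; 2; 3]%N, forall i, i < 4 /\ count_mem p (w3 i) = i}%N.
Proof.
move=> i; rewrite !inE => /or4P [] /eqP -> /=; rewrite ?eqxx ?(eq_sym q p) ?(negbTE hpq) //.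
Qed.

Lemma Em_rot3 : Em [:: p; p; p] [:: p; p; p] =
  c ^+ 6 * Em [:: p; p; p] [:: p; p; p] + s ^+ 6 * Em [:: q; q; q] [:: q; q; q]
  + 9 * c ^+ 4 * s ^+ 2 * Em [:: p; p; q] [:: p; p; q] + 9 * c ^+ 2 * s ^+ 4 * Em [:: p; q; q] [:: p; q; q].
Proof.
rewrite -{1}(Em_inv hU [:: p; p; p] [:: p; p; p] Rot_unitary).
under E_ext do rewrite G_rot3.
rewrite (E_lin2 _ (fun i j => k3 i * k3 j)) (phase_kill (p := p)) //; last exact: count_w3.
rewrite !big_cons big_nil /=; ring.
Qed.

Variable r : 'I_d.
Hypotheses (hrp : r != p) (hrq : r != q).

Definition w2 (i : nat) : seq 'I_d :=
  match i with 0 => [:: q; q; r] | 1 => [:: p; q; r] | _ => [:: p; p; r] end%N.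
Definition k2 (i : nat) : C :=
  match i with 0%N => (- s) ^+ 2 | 1%N => 2 * c * (- s) | _ => c ^+ 2 end.

Lemma G_rot2 (B : M) : G [:: p; p; r] [:: p; p; r] (Rot *m B) =
  \sum_(i <- [:: 0; 1; 2]%N) \sum_(j <- [:: 0; 1; 2]%N) k2 i * k2 j * G (w2 i) (w2 j) B.
Proof.
rewrite /G !big_cons !big_nil /= !addr0 !mulr_sumr -!big_split /=.
apply: eq_bigr => a _; rewrite !big_cons !big_nil RotE_p RotE_r // conjB !conjM hc hs; ring.
Qed.

Lemma count_w2 : {in [:: 0; 1; 2]%N, forall i, i < 4 /\ count_mem p (w2 i) = i}%N.
Proof.
move=> i; rewrite !inE => /or3P [] /eqP -> /=;
rewrite ?eqxx ?(eq_sym q p) ?(negbTE hpq) ?(negbTE hrp) //.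
Qed.

Lemma Em_rot2 : Em [:: p; p; r] [:: p; p; r] =
  c ^+ 4 * Em [:: p; p; r] [:: p; p; r] + s ^+ 4 * Em [:: q; q; r] [:: q; q; r]
  + 4 * c ^+ 2 * s ^+ 2 * Em [:: p; q; r] [:: p; q; r].
Proof.
rewrite -{1}(Em_inv hU [:: p; p; r] [:: p; p; r] Rot_unitary).
under E_ext do rewrite G_rot2.
rewrite (E_lin2 _ (fun i j => k2 i * k2 j)) (phase_kill (p := p)) //; last exact: count_w2.
rewrite !big_cons big_nil /=; ring.
Qed.
End B.

Section Perm.
Variable T : eqType.
Lemma perm2 (a b v w : T) : perm_eq [:: a; b] [:: v; w] ->
  (v = a /\ w = b) \/ (v = b /\ w = a).
Proof.
move=> H; have : v \in [:: a; b] by rewrite (perm_mem H) inE eqxx.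
rewrite !inE => /orP [/eqP ev|/eqP ev]; subst v.
  move: H; rewrite perm_cons => H; left; split => //.
  have hw : w \in [:: b] by rewrite (perm_mem H) inE eqxx.
  by move: hw; rewrite inE => /eqP.
have H' : perm_eq [:: b; a] [:: b; w].
  by apply: perm_trans H; apply/permP => f /=; lia.
move: H'; rewrite perm_cons => H'; right; split => //.
have hw : w \in [:: a] by rewrite (perm_mem H') inE eqxx.
by move: hw; rewrite inE => /eqP.
Qed.

Lemma perm3 (a b c u v w : T) : perm_eq [:: a; b; c] [:: u; v; w] ->
  [/\ u = a, v = b & w = c] \/ [/\ u = a, v = c & w = b] \/ [/\ u = b, v = a & w = c] \/
      [/\ u = b, v = c & w = a] \/ [/\ u = c, v = a & w = b] \/ [/\ u = c, v = b & w = a].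
Proof.
move=> H; have : u \in [:: a; b; c] by rewrite (perm_mem H) inE eqxx.
rewrite !inE => /or3P [/eqP eu|/eqP eu|/eqP eu]; subst u.
- move: H; rewrite perm_cons => /perm2 [[-> ->]|[-> ->]].
    by left.
  by right; left.
- have H' : perm_eq [:: b; a; c] [:: b; v; w].
    by apply: perm_trans H; apply/permP => f /=; lia.
  move: H'; rewrite perm_cons => /perm2 [[-> ->]|[-> ->]].
    by do 2 right; left.
  by do 3 right; left.
- have H' : perm_eq [:: c; a; b] [:: c; v; w].
    by apply: perm_trans H; apply/permP => f /=; lia.
  move: H'; rewrite perm_cons => /perm2 [[-> ->]|[-> ->]].
    by do 4 right; left.
  by do 5 right.
Qed.
End Perm.

Section F.
Variable R : realType.
Local Notation C := (R[i]).
Variable d : nat.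
Local Notation M := 'M[C]_d.
Context {dO : measure_display} {O : measurableType dO} (P : probability O R) (U : O -> M).
Hypothesis hU : haar_unitary P U.
Local Notation E := (cexpect P).
Local Notation Em := (Em P U).

Lemma Em_perm s s' t t' : perm_eq s s' -> perm_eq t t' -> Em s t = Em s' t'.
Proof.
move=> hs ht; apply: E_ext => w; rewrite /G; apply: eq_bigr => a _.
by rewrite (perm_big _ hs) (perm_big _ ht).
Qed.

Lemma conj_real_nat (n m : nat) : conjc (n%:R / m%:R : C) = n%:R / m%:R.
Proof. by rewrite conjM conjc_inv !conjc_nat. Qed.
Lemma conj01 : conjc (0 : C) = 0. Proof. exact: conj0. Qed.
Lemma conj1 : conjc (1 : C) = 1. Proof. by apply/eqP; rewrite eq_complex /= oppr0 !eqxx. Qed.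

Lemma F1 p q : p != q -> Em [:: p; p; p] [:: p; p; p] = Em [:: q; q; q] [:: q; q; q].
Proof.
move=> hpq; have h01 : (0 : C) ^+ 2 + 1 ^+ 2 = 1 by rewrite expr0n expr1n add0r.
have := Em_rot3 hU hpq conj01 conj1 h01 => e.
rewrite {1}e; ring.
Qed.

Lemma nz (n : nat) : (n.+1%:R : C) != 0. Proof. by rewrite pnatr_eq0. Qed.

Lemma solve2 (x u v : C) :
  let c := 3%:R / 5%:R : C in let s := 4%:R / 5%:R : C in
  x = c ^+ 6 * x + s ^+ 6 * x + 9 * c ^+ 4 * s ^+ 2 * u + 9 * c ^+ 2 * s ^+ 4 * v ->
  x = s ^+ 6 * x + c ^+ 6 * x + 9 * s ^+ 4 * c ^+ 2 * u + 9 * s ^+ 2 * c ^+ 4 * v ->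
  3 * u = x.
Proof.
move=> c s e1 e2.
have key : 3 * u - x = 625%:R / 336%:R * (x - (c ^+ 6 * x + s ^+ 6 * x + 9 * c ^+ 4 * s ^+ 2 * u + 9 * c ^+ 2 * s ^+ 4 * v))
   - 625%:R / 189%:R * (x - (s ^+ 6 * x + c ^+ 6 * x + 9 * s ^+ 4 * c ^+ 2 * u + 9 * s ^+ 2 * c ^+ 4 * v)).
  by rewrite /c /s; field; rewrite ?nz.
move: key; rewrite -e1 -e2 !subrr !mulr0 subrr => /eqP; rewrite subr_eq0; by move/eqP.
Qed.

Lemma hcs35 : (3%:R / 5%:R : C) ^+ 2 + (4%:R / 5%:R) ^+ 2 = 1.
Proof. by field; rewrite ?nz. Qed.
Lemma hcs45 : (4%:R / 5%:R : C) ^+ 2 + (3%:R / 5%:R) ^+ 2 = 1.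
Proof. by field; rewrite ?nz. Qed.

Lemma F2 p q : p != q -> 3 * Em [:: p; p; q] [:: p; p; q] = Em [:: p; p; p] [:: p; p; p].
Proof.
move=> hpq.
have e1 := Em_rot3 hU hpq (conj_real_nat 3 5) (conj_real_nat 4 5) hcs35.
have e2 := Em_rot3 hU hpq (conj_real_nat 4 5) (conj_real_nat 3 5) hcs45.
rewrite -(F1 hpq) in e1 e2.
exact: (solve2 e1 e2).
Qed.

Lemma solve3 (x y y' z : C) :
  let c := 3%:R / 5%:R : C in let s := 4%:R / 5%:R : C in
  y = c ^+ 4 * y + s ^+ 4 * y' + 4 * c ^+ 2 * s ^+ 2 * z ->
  3 * y = x -> 3 * y' = x -> 6 * z = x.
Proof.
move=> c s e hy hy'.
have key : 6 * z - x = - 625%:R / 96%:R * (y - (c ^+ 4 * y + s ^+ 4 * y' + 4 * c ^+ 2 * s ^+ 2 * z))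
  + 17%:R / 9%:R * (3 * y - x) - 8%:R / 9%:R * (3 * y' - x).
  by rewrite /c /s; field; rewrite ?nz.
move: key; rewrite -e hy hy' !subrr !mulr0 subr0 addr0 => /eqP; rewrite subr_eq0; by move/eqP.
Qed.

Lemma F3 p q r : p != q -> r != p -> r != q ->
  6 * Em [:: p; q; r] [:: p; q; r] = Em [:: p; p; p] [:: p; p; p].
Proof.
move=> hpq hrp hrq.
have e := Em_rot2 hU hpq (conj_real_nat 3 5) (conj_real_nat 4 5) hcs35 hrp hrq.
apply: (solve3 e).
  by rewrite F2 // eq_sym.
by rewrite F2 ?(F1 hpq) // eq_sym.
Qed.
End F.

Section D.
Variable R : realType.
Local Notation C := (R[i]).
Variable d : nat.
Local Notation M := 'M[C]_d.
Context {dO : measure_display} {O : measurableType dO} (P : probability O R) (U : O -> M).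
Hypothesis hU : haar_unitary P U.
Local Notation E := (cexpect P).
Local Notation Em := (Em P U).

Definition Nf (x1 x2 x3 z1 z2 z3 : 'I_d) : C :=
  (x1 == z1)%:R * (x2 == z2)%:R * (x3 == z3)%:R + (x1 == z1)%:R * (x2 == z3)%:R * (x3 == z2)%:R
  + (x1 == z2)%:R * (x2 == z1)%:R * (x3 == z3)%:R + (x1 == z2)%:R * (x2 == z3)%:R * (x3 == z1)%:R
  + (x1 == z3)%:R * (x2 == z1)%:R * (x3 == z2)%:R + (x1 == z3)%:R * (x2 == z2)%:R * (x3 == z1)%:R.

Variable p0 : 'I_d.
Definition alpha := Em [:: p0; p0; p0] [:: p0; p0; p0].

Lemma alpha_all p : Em [:: p; p; p] [:: p; p; p] = alpha.
Proof. by case: (eqVneq p p0) => [->|h] //; rewrite (F1 hU h). Qed.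

Lemma Eppr p r : r != p -> Em [:: p; p; r] [:: p; p; r] = alpha / 3.
Proof.
move=> h; rewrite -(alpha_all p) -(F2 hU (q := r)) 1?eq_sym //; by field; rewrite ?nz.
Qed.

Lemma Ediag x1 x2 x3 : Em [:: x1; x2; x3] [:: x1; x2; x3] = alpha / 6 * Nf x1 x2 x3 x1 x2 x3.
Proof.
case: (eqVneq x1 x2) => [e12|n12]; case: (eqVneq x2 x3) => [e23|n23]; case: (eqVneq x1 x3) => [e13|n13].
- subst x2; subst x3; rewrite /Nf !eqxx alpha_all /=; by field; rewrite ?nz.
- by subst x2; subst x3; rewrite eqxx in n13.
- by subst x2; subst x3; rewrite eqxx in n23.
- subst x2; rewrite Eppr 1?eq_sym // /Nf !eqxx (negbTE n13) (eq_sym x3 x1) (negbTE n13) /=; by field; rewrite ?nz.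
- by rewrite e13 -e23 eqxx in n12.
- subst x3; rewrite (Em_perm P U (s' := [:: x2; x2; x1]) (t' := [:: x2; x2; x1])); try by apply/permP => f /=; lia.
  rewrite Eppr // /Nf !eqxx (negbTE n12) (eq_sym x2 x1) (negbTE n12) /=; by field; rewrite ?nz.
- subst x3; rewrite (Em_perm P U (s' := [:: x1; x1; x2]) (t' := [:: x1; x1; x2])); try by apply/permP => f /=; lia.
  rewrite Eppr 1?eq_sym // /Nf !eqxx (negbTE n12) (eq_sym x2 x1) (negbTE n12) /=; by field; rewrite ?nz.
- have n31 : x3 != x1 by rewrite eq_sym.
  have n32 : x3 != x2 by rewrite eq_sym.
  have e := F3 hU n12 n31 n32; rewrite alpha_all in e.
  rewrite /Nf !eqxx ?(negbTE n12) ?(negbTE n23) ?(negbTE n13) ?(negbTE n31) ?(negbTE n32) ?(eq_sym x2 x1) ?(negbTE n12) /=.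
  rewrite -e; by field; rewrite ?nz.
Qed.

Lemma term0 (a b c : bool) : (a -> b -> c -> False) -> (a%:R * b%:R * c%:R : C) = 0.
Proof.
case: a; case: b; case: c => H /=; first by exfalso; exact: (H isT isT isT).
all: ring.
Qed.

Lemma mod4 (a b : nat) : a != b -> (a <= 3)%N -> (b <= 3)%N -> ((a + 3 * b) %% 4 != 0)%N.
Proof. move=> /eqP h ha hb; apply/eqP => e; lia. Qed.

Lemma Egen x1 x2 x3 z1 z2 z3 :
  Em [:: x1; x2; x3] [:: z1; z2; z3] = alpha / 6 * Nf x1 x2 x3 z1 z2 z3.
Proof.
case hp : (perm_eq [:: x1; x2; x3] [:: z1; z2; z3]); last first.
  move/negbT: (hp); rewrite /perm_eq => /allPn [j _ hj].
  rewrite (Em_zero hU (j := j)); last by apply: mod4 => //; exact: count_size.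
  rewrite /Nf !term0 ?addr0 ?mulr0 //; move=> /eqP e1 /eqP e2 /eqP e3; move: hp;
    rewrite -e1 -e2 -e3 => /negbT /negP; apply; apply/permP => f /=; lia.
have E1 : forall t, perm_eq t [:: x1; x2; x3] ->
    Em [:: x1; x2; x3] t = alpha / 6 * Nf x1 x2 x3 x1 x2 x3.
  by move=> t ht; rewrite (Em_perm P U (perm_refl _) ht) Ediag.
have := perm3 hp => [[[-> -> ->]|[[-> -> ->]|[[-> -> ->]|[[-> -> ->]|[[-> -> ->]|[-> -> ->]]]]]]];
rewrite E1; try by apply/permP => f /=; lia.
all: rewrite /Nf ?(eq_sym x2 x1) ?(eq_sym x3 x1) ?(eq_sym x3 x2) ?eqxx /=; ring.
Qed.
End D.

Section N.
Variable R : realType.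
Local Notation C := (R[i]).
Variable d : nat.
Local Notation M := 'M[C]_d.
Context {dO : measure_display} {O : measurableType dO} (P : probability O R) (U : O -> M).
Hypothesis hU : haar_unitary P U.
Local Notation E := (cexpect P).
Local Notation Em := (Em P U).
Local Notation Nf := (@Nf R d).

Lemma sum_delta' (F : 'I_d -> C) k : \sum_l (l == k)%:R * F l = F k.
Proof. by under eq_bigr do rewrite eq_sym; exact: sum_delta. Qed.

Lemma sum_cst (c : C) : \sum_(l < d) c = d%:R * c.
Proof. by rewrite sumr_const card_ord mulr_natl. Qed.

Lemma sumN i j k l : \sum_m Nf i j m k l m = (d + 2)%:R * ((i == k)%:R * (j == l)%:R + (i == l)%:R * (j == k)%:R).
Proof.
have sc : forall a b : bool, \sum_(m < d) a%:R * b%:R * (m == m)%:R = d%:R * (a%:R * b%:R) :> C.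
  by move=> a b; rewrite -sum_cst; apply: eq_bigr => m _; rewrite eqxx mulr1.
have sd : forall (a : bool) (x y : 'I_d), \sum_m a%:R * (x == m)%:R * (m == y)%:R = a%:R * (x == y)%:R :> C.
  move=> a x y; rewrite (eq_bigr (fun m => (x == m)%:R * (a%:R * (m == y)%:R))).
    by rewrite sum_delta.
  by move=> m _; ring.
have sd2 : forall (a : bool) (x y : 'I_d), \sum_m (x == m)%:R * a%:R * (m == y)%:R = a%:R * (x == y)%:R :> C.
  move=> a x y; rewrite (eq_bigr (fun m => (x == m)%:R * (a%:R * (m == y)%:R))).
    by rewrite sum_delta.
  by move=> m _; ring.
rewrite /Nf !big_split /= !sc !sd !sd2 natrD; ring.
Qed.

Lemma Gext (B : M) s t : unitary B -> G s t B = \sum_m G (s ++ [:: m]) (t ++ [:: m]) B.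
Proof.
move=> uB; rewrite /G exchange_big /=; apply: eq_bigr => a _.
have col : \sum_m B m a * conjc (B m a) = 1.
  have h := unitary_col uB a a; rewrite eqxx /= ?mulr1n in h.
  by rewrite -h; apply: eq_bigr => m _; rewrite mulrC.
transitivity ((\prod_(k <- s) B k a) * (\prod_(k <- t) conjc (B k a)) * \sum_m B m a * conjc (B m a)).
  by rewrite col mulr1.
rewrite mulr_sumr; apply: eq_bigr => m _; rewrite !big_cat /= !big_cons !big_nil; ring.
Qed.

Lemma cgoodGU s t : cgood (fun w => G s t (U w)).
Proof. by apply: cgood_Gf => k a; exact: (cgood_entry hU). Qed.

Lemma Em_ext s t : Em s t = \sum_m Em (s ++ [:: m]) (t ++ [:: m]).
Proof.
rewrite /Em -E_sum; last by move=> m; exact: cgoodGU.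
by apply: E_ext => w; apply: Gext; case: hU => uU _ _; exact: uU.
Qed.

Lemma Em_nil : Em [::] [::] = d%:R.
Proof.
transitivity (cexpect P (fun=> (d%:R : C))); last exact: E_cst.
apply: E_ext => w.
by rewrite /G (eq_bigr (fun=> 1)) ?sum_cst ?mulr1 // => a _; rewrite !big_nil mulr1.
Qed.

Variable p0 : 'I_d.
Local Notation kappa := (alpha P U p0 / 6).

Lemma Em2 i j k l : Em [:: i; j] [:: k; l] =
  kappa * (d + 2)%:R * ((i == k)%:R * (j == l)%:R + (i == l)%:R * (j == k)%:R).
Proof.
rewrite Em_ext /=; under eq_bigr do rewrite (Egen hU p0).
by rewrite -mulr_sumr sumN mulrA.
Qed.

Lemma Em1 i k : Em [:: i] [:: k] = kappa * (d + 2)%:R * (d + 1)%:R * (i == k)%:R.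
Proof.
rewrite Em_ext /=; under eq_bigr do rewrite Em2 eqxx mulr1.
rewrite -mulr_sumr big_split /= sum_cst.
rewrite (eq_bigr (fun m => (i == m)%:R * (m == k)%:R)); last by move=> m _; ring.
by rewrite sum_delta natrD; ring.
Qed.

Lemma kappaE : kappa * ((d + 1) * (d + 2))%:R = 1.
Proof.
have h := Em_nil; rewrite Em_ext /= in h.
have h2 : \sum_m Em [:: m] [:: m] = d%:R * (kappa * (d + 2)%:R * (d + 1)%:R).
  by rewrite -sum_cst; apply: eq_bigr => m _; rewrite Em1 eqxx mulr1.
rewrite h2 in h.
have hd : (d%:R : C) != 0 by case: d p0 => [[]//|n _]; exact: nz.
apply: (mulfI hd); rewrite mulr1 -[RHS]h natrM; ring.
Qed.
End N.

Section Pw.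
Variable R : realType.
Local Notation C := (R[i]).
Variable d : nat.
Local Notation M := 'M[C]_d.
Variable B : M.
Hypothesis uB : unitary B.
Variables x1 x2 x3 z1 z2 z3 : 'I_d.

Definition tt3 (y1 y2 y3 : 'I_d) : C :=
  B x1 y1 * B x2 y2 * B x3 y3 * conjc (B z1 y1 * B z2 y2 * B z3 y3).

Local Notation S3 F := (\sum_(y1 < d) \sum_(y2 < d) \sum_(y3 < d) (F y1 y2 y3 : C)).

Lemma S_all : S3 tt3 = (x1 == z1)%:R * (x2 == z2)%:R * (x3 == z3)%:R.
Proof.
rewrite -(unitary_row uB x1 z1) -(unitary_row uB x2 z2) -(unitary_row uB x3 z3).
rewrite big_distrlr big_distrl; apply: eq_bigr => y1 _; rewrite big_distrl.
apply: eq_bigr => y2 _; rewrite big_distrr; apply: eq_bigr => y3 _.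
by rewrite /tt3 !conjM /=; ring.
Qed.

Lemma S_12 : S3 (fun y1 y2 y3 => (y1 == y2)%:R * tt3 y1 y2 y3) = G [:: x1; x2] [:: z1; z2] B * (x3 == z3)%:R.
Proof.
transitivity (\sum_y1 \sum_y3 tt3 y1 y1 y3).
  apply: eq_bigr => y1 _.
  rewrite (eq_bigr (fun y2 => (y1 == y2)%:R * \sum_y3 tt3 y1 y2 y3)); first exact: sum_delta.
  by move=> y2 _; rewrite mulr_sumr.
rewrite /G -(unitary_row uB x3 z3) big_distrlr; apply: eq_bigr => y1 _; apply: eq_bigr => y3 _.
by rewrite /tt3 !big_cons !big_nil !conjM /=; ring.
Qed.

Lemma S_23 : S3 (fun y1 y2 y3 => (y2 == y3)%:R * tt3 y1 y2 y3) = (x1 == z1)%:R * G [:: x2; x3] [:: z2; z3] B.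
Proof.
transitivity (\sum_y1 \sum_y2 tt3 y1 y2 y2).
  by apply: eq_bigr => y1 _; apply: eq_bigr => y2 _; rewrite sum_delta.
rewrite /G -(unitary_row uB x1 z1) big_distrlr; apply: eq_bigr => y1 _; apply: eq_bigr => y2 _.
by rewrite /tt3 !big_cons !big_nil !conjM /=; ring.
Qed.

Lemma S_13 : S3 (fun y1 y2 y3 => (y1 == y3)%:R * tt3 y1 y2 y3) = G [:: x1; x3] [:: z1; z3] B * (x2 == z2)%:R.
Proof.
transitivity (\sum_y1 \sum_y2 tt3 y1 y2 y1).
  by apply: eq_bigr => y1 _; apply: eq_bigr => y2 _; rewrite sum_delta.
rewrite /G -(unitary_row uB x2 z2) big_distrlr; apply: eq_bigr => y1 _; apply: eq_bigr => y2 _.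
by rewrite /tt3 !big_cons !big_nil !conjM /=; ring.
Qed.

Lemma S_123 : S3 (fun y1 y2 y3 => (y1 == y2)%:R * (y2 == y3)%:R * tt3 y1 y2 y3) = G [:: x1; x2; x3] [:: z1; z2; z3] B.
Proof.
transitivity (\sum_y1 tt3 y1 y1 y1).
  apply: eq_bigr => y1 _.
  rewrite (eq_bigr (fun y2 => (y1 == y2)%:R * tt3 y1 y2 y2)); first exact: sum_delta.
  move=> y2 _; rewrite (eq_bigr (fun y3 => (y1 == y2)%:R * ((y2 == y3)%:R * tt3 y1 y2 y3))).
    by rewrite -mulr_sumr sum_delta.
  by move=> y3 _; rewrite mulrA.
rewrite /G; apply: eq_bigr => y1 _.
by rewrite /tt3 !big_cons !big_nil !conjM /=; ring.
Qed.

Lemma S3lin (u : C) (F H : 'I_d -> 'I_d -> 'I_d -> C) :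
  S3 (fun a b c => u * F a b c + H a b c) = u * S3 F + S3 H.
Proof.
rewrite mulr_sumr -big_split; apply: eq_bigr => a _.
rewrite mulr_sumr -big_split; apply: eq_bigr => b _.
by rewrite mulr_sumr -big_split.
Qed.
Lemma S3_0 : S3 (fun _ _ _ => 0) = 0.
Proof. by rewrite big1 // => a _; rewrite big1 // => b _; rewrite big1. Qed.

Lemma sum_trip (F : trip d -> C) : \sum_(y : trip d) F y = S3 (fun y1 y2 y3 => F ((y1, y2), y3)).
Proof.
rewrite [RHS](pair_bigA _ (fun y1 y2 => \sum_y3 F ((y1, y2), y3))) /=.
rewrite [RHS](pair_bigA _ (fun p y3 => F ((p.1, p.2), y3))) /=.
by apply: eq_bigr => -[[a b] c] _.
Qed.

Lemma andR (a b : bool) : ((a && b)%:R : C) = a%:R * b%:R.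
Proof. by case: a; case: b; rewrite /= ?mulr1 ?mul1r ?mulr0 ?mul0r. Qed.

Lemma pw_main :
  \sum_(y : trip d) \sum_(v : trip d) tens3 B ((x1, x2), x3) y * @Oplus R d y v * conjc (tens3 B ((z1, z2), z3) v) =
  ((d + 1) * (d + 2))%N%:R * G [:: x1; x2; x3] [:: z1; z2; z3] B
  - (d + 1)%N%:R * (G [:: x1; x2] [:: z1; z2] B * (x3 == z3)%:R + (x1 == z1)%:R * G [:: x2; x3] [:: z2; z3] B
                    + G [:: x1; x3] [:: z1; z3] B * (x2 == z2)%:R)
  + 2 * ((x1 == z1)%:R * (x2 == z2)%:R * (x3 == z3)%:R).
Proof.
have h1 : forall y, \sum_(v : trip d) tens3 B ((x1, x2), x3) y * @Oplus R d y v * conjc (tens3 B ((z1, z2), z3) v)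
   = tens3 B ((x1, x2), x3) y * @Oplus R d y y * conjc (tens3 B ((z1, z2), z3) y).
  move=> y; rewrite (bigD1 y) //= big1 ?addr0 // => v hv.
  by rewrite /Oplus eq_sym (negbTE hv) mulr0 mul0r.
under eq_bigr do rewrite h1.
rewrite sum_trip.
set c3 := ((d + 1) * (d + 2))%N%:R; set c2 := (d + 1)%N%:R.
transitivity (S3 (fun a b c => c3 * ((a == b)%:R * (b == c)%:R * tt3 a b c) +
   ((- c2) * ((a == b)%:R * tt3 a b c) + ((- c2) * ((b == c)%:R * tt3 a b c) +
   ((- c2) * ((a == c)%:R * tt3 a b c) + (2 * tt3 a b c + 0)))))).
  apply: eq_bigr => a _; apply: eq_bigr => b _; apply: eq_bigr => c _.
  by rewrite /Oplus /tens3 /tt3 eqxx /= andR; ring.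
rewrite !S3lin S3_0 S_123 S_12 S_23 S_13 S_all; ring.
Qed.
End Pw.

Section T.
Variable R : realType.
Local Notation C := (R[i]).
Variable d : nat.
Local Notation M := 'M[C]_d.
Context {dO : measure_display} {O : measurableType dO} (P : probability O R) (U : O -> M).
Hypothesis hU : haar_unitary P U.
Local Notation E := (cexpect P).
Local Notation Em := (Em P U).

Lemma E_lin5 (a1 a2 a3 a4 k : C) (f1 f2 f3 f4 : O -> C) :
  cgood f1 -> cgood f2 -> cgood f3 -> cgood f4 ->
  E (fun w => a1 * f1 w + (a2 * f2 w + (a3 * f3 w + (a4 * f4 w + (fun=> k) w)))) =
  a1 * E f1 + (a2 * E f2 + (a3 * E f3 + (a4 * E f4 + k))).
Proof.
move=> g1 g2 g3 g4.
have m : forall (a : C) (f : O -> C), cgood f -> cgood (fun w => a * f w) by move=> a f gf; apply: cgood_mul => //; exact: cgood_cst.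
have gk := cgood_cst (T := O) k.
rewrite E_add ?E_add ?E_add ?E_add ?E_scale ?E_cst //; try exact: m.
all: by repeat first [apply: cgood_add|exact: m|exact: gk].
Qed.

Lemma twirl_entry x1 x2 x3 z1 z2 z3 :
  twirl3 P U (@Oplus R d) ((x1, x2), x3) ((z1, z2), z3) =
  ((d + 1) * (d + 2))%N%:R * Em [:: x1; x2; x3] [:: z1; z2; z3]
  - (d + 1)%N%:R * (Em [:: x1; x2] [:: z1; z2] * (x3 == z3)%:R + (x1 == z1)%:R * Em [:: x2; x3] [:: z2; z3]
                    + Em [:: x1; x3] [:: z1; z3] * (x2 == z2)%:R)
  + 2 * ((x1 == z1)%:R * (x2 == z2)%:R * (x3 == z3)%:R).
Proof.
set c3 := ((d + 1) * (d + 2))%N%:R; set c2 := (d + 1)%N%:R.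
set e1 := (x1 == z1)%:R; set e2 := (x2 == z2)%:R; set e3 := (x3 == z3)%:R.
have gG := cgoodGU hU.
rewrite /twirl3.
transitivity (E (fun w => c3 * G [:: x1; x2; x3] [:: z1; z2; z3] (U w) +
   ((- c2 * e3) * G [:: x1; x2] [:: z1; z2] (U w) + ((- c2 * e1) * G [:: x2; x3] [:: z2; z3] (U w) +
   ((- c2 * e2) * G [:: x1; x3] [:: z1; z3] (U w) + (fun=> 2 * (e1 * e2 * e3)) w))))).
  apply: E_ext => w; rewrite pw_main; last by case: hU => uU _ _; exact: uU.
  rewrite /c3 /c2 /e1 /e2 /e3; ring.
by rewrite E_lin5 //; rewrite /Em; ring.
Qed.

Lemma twirl_main : twirl3 P U (@Oplus R d) = @Mplus R d.
Proof.
apply: funext => -[[x1 x2] x3]; apply: funext => -[[z1 z2] z3].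
have p0 : 'I_d := x1.
rewrite twirl_entry (Egen hU p0) !(Em2 hU p0).
have K := kappaE hU p0.
set k := alpha P U p0 / 6 in K *.
rewrite /Mplus /W123 /W132 /= !xpair_eqE !andR /Nf.
rewrite natrM in K *.
set A := (d + 1)%:R in K *; set Bb := (d + 2)%:R in K *.
apply/eqP; rewrite -subr_eq0; apply/eqP.
set X := ((x1 == z1)%:R * (x2 == z2)%:R * (x3 == z3)%:R : C).
set Y := ((x1 == z2)%:R * (x2 == z3)%:R * (x3 == z1)%:R + (x1 == z3)%:R * (x2 == z1)%:R * (x3 == z2)%:R : C).
transitivity ((k * (A * Bb) - 1) * (Y - 2 * X)).
  rewrite /X /Y; ring.
by rewrite K subrr mul0r.
Qed.

Lemma sumd (I : finType) (F : I -> C) (a : I) : \sum_y (y == a)%:R * F y = F a.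
Proof.
rewrite (bigD1 a) //= eqxx mul1r big1 ?addr0 // => y /negbTE ->; by rewrite mul0r.
Qed.

Lemma cgood_tens (x y z v : trip d) : cgood (fun w => tens3 (U w) x y * conjc (tens3 (U w) z v)).
Proof.
have ge := cgood_entry hU.
rewrite /tens3; apply: cgood_mul; last apply: cgood_conj;
  by repeat apply: cgood_mul; exact: ge.
Qed.

Lemma twirl_lin (X : op R (trip d)) x z :
  \sum_a \sum_a' X a a' * twirl3 P U (matunit R a a') x z = twirl3 P U X x z.
Proof.
have hm : forall a a', twirl3 P U (matunit R a a') x z = E (fun w => tens3 (U w) x a * conjc (tens3 (U w) z a')).
  move=> a a'; rewrite /twirl3; apply: E_ext => w.
  rewrite (eq_bigr (fun y => (y == a)%:R * \sum_v (v == a')%:R * (tens3 (U w) x y * conjc (tens3 (U w) z v)))).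
    by rewrite sumd sumd.
  move=> y _; rewrite mulr_sumr; apply: eq_bigr => v _; rewrite /matunit andR; ring.
under eq_bigr do under eq_bigr do rewrite hm.
transitivity (E (fun w => \sum_a \sum_a' X a a' * (tens3 (U w) x a * conjc (tens3 (U w) z a')))).
  rewrite E_sum; last first.
    move=> a; apply: cgood_sum => a'; apply: cgood_mul; [exact: cgood_cst|exact: cgood_tens].
  apply: eq_bigr => a _; rewrite E_sum; last first.
    by move=> a'; apply: cgood_mul; [exact: cgood_cst|exact: cgood_tens].
  by apply: eq_bigr => a' _; rewrite E_scale //; exact: cgood_tens.
rewrite /twirl3; apply: E_ext => w; apply: eq_bigr => a _; apply: eq_bigr => a' _; ring.
Qed.
End T.

Theorem proposition1 (R : realType) (dA dB : nat)
  (dOA : measure_display) (OA : measurableType dOA) (PA : probability OA R)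
  (UA : OA -> 'M[R[i]]_dA)
  (dOB : measure_display) (OB : measurableType dOB) (PB : probability OB R)
  (UB : OB -> 'M[R[i]]_dB) :
  haar_unitary PA UA -> haar_unitary PB UB ->
  [/\ twirl3 PA UA (@Oplus R dA) = @Mplus R dA,
      twirl3 PB UB (@Oplus R dB) = @Mplus R dB
    & tens_super (twirl3 PA UA) (twirl3 PB UB)
        (tensop (@Oplus R dA) (@Oplus R dB))
      = tensop (@Mplus R dA) (@Mplus R dB)].
Proof.
move=> hA hB.
have eA := twirl_main hA; have eB := twirl_main hB.
split => //.
apply: funext => -[x1 x2]; apply: funext => -[y1 y2].
rewrite /tens_super /tensop /=.
transitivity ((\sum_a \sum_a' @Oplus R dA a a' * twirl3 PA UA (matunit R a a') x1 y1) *
              (\sum_b \sum_b' @Oplus R dB b b' * twirl3 PB UB (matunit R b b') x2 y2)).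
  rewrite big_distrl; apply: eq_bigr => a _; rewrite big_distrl; apply: eq_bigr => a' _ /=.
  rewrite big_distrr; apply: eq_bigr => b _; rewrite big_distrr; apply: eq_bigr => b' _ /=; ring.
by rewrite (twirl_lin hA) (twirl_lin hB) eA eB.
Qed.
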